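(* Let $G$ be a connected graph and let $v\in V(G)$ be a cut-vertex such that either (1) $G-v$ has at least three connected components, or (2) $G-v$ has two connected components $G_1,G_2$ such that, for both $i=1,2$, the induced subgraph $G[V(G_i)\cup\{v\}]$ is not isomorphic to a path. Then $v$ is a void vertex of $G$.
   Context: All graphs are finite and simple. For vertices $u,v$ of a connected graph $G$, $d(u,v)$ is the length of a shortest $u$–$v$ path. A set $R\subseteq V(G)$ is a resolving set if for all distinct $x,y\in V(G)$ there is $r\in R$ with $d(r,x)\neq d(r,y)$. The metric dimension $\dim(G)$ is the minimum cardinality of a resolving set, and a resolving set of cardinality $\dim(G)$ is a metric basis. A vertex is a void vertex if it belongs to no metric basis of $G$. A cut-vertex is a vertex $v$ such that $G-v$ is disconnected; $G[S]$ denotes the subgraph induced by $S$. *)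

(* Defs.v *)
(* A finite simple graph: vertex type T : finType, adjacency
   relation e : rel T, assumed symmetric and irreflexive in the theorem. *)
From mathcomp Require Import all_boot.
Set Implicit Arguments. Unset Strict Implicit. Unset Printing Implicit Defensive.

Section Graph.
Variables (T : finType) (e : rel T).

Fixpoint nwalk (n : nat) (x y : T) : bool :=
  if n is n'.+1 then [exists z, e x z && nwalk n' z y] else x == y.

(* d(x,y): length of a shortest x-y path = least n with an n-edge walk.
   (In a connected graph this is < #|T|; the value #|T| is a dummy
   used only when no walk exists.) *)
Definition dist (x y : T) : nat :=
  find (fun n => nwalk n x y) (iota 0 #|T|).

Definition connected_graph : Prop := forall x y : T, connect e x y.

Definition resolving (R : {set T}) : Prop :=
  forall x y : T, x != y -> exists2 r, r \in R & dist r x != dist r y.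

Definition metric_basis (R : {set T}) : Prop :=
  resolving R /\ forall S : {set T}, resolving S -> #|R| <= #|S|.

Definition void_vertex (v : T) : Prop :=
  forall R : {set T}, metric_basis R -> v \notin R.

Definition edel (v : T) : rel T := fun x y => [&& e x y, x != v & y != v].

Definition cut_vertex (v : T) : Prop :=
  exists x y : T, [/\ x != v, y != v & ~~ connect (edel v) x y].

Definition components_del (v : T) : {set {set T}} :=
  [set [set y | connect (edel v) x y] | x in [set~ v]].

(* the induced subgraph G[S] is isomorphic to a path P_{|S|}:
   S can be listed without repetition so that two vertices of S are
   adjacent iff they are consecutive in the listing *)
Definition induced_is_path (S : {set T}) : Prop :=
  exists s : seq T,
    [/\ uniq s, S = [set x in s] &
        forall x y, x \in s -> y \in s ->
          e x y = ((index x s).+1 == index y s) || ((index y s).+1 == index x s)].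

End Graph.

(* Main.v *)
Require Import Defs.
From mathcomp Require Import all_boot zify.
Set Implicit Arguments. Unset Strict Implicit. Unset Printing Implicit Defensive.

Section Dist.
Variables (T : finType) (e : rel T).
Hypothesis e_sym : symmetric e.
Hypothesis e_irr : irreflexive e.
Hypothesis G_conn : connected_graph e.

Lemma nwalkDP m n x y :
  nwalk e (m + n) x y <-> exists z, nwalk e m x z /\ nwalk e n z y.
Proof.
elim: m x => [|m IH] x /=.
  split=> [H|[z [/eqP -> H]]] //; by exists x; rewrite eqxx.
split.
  move/existsP=> [z /andP [exz /IH [w [H1 H2]]]].
  exists w; split=> //; apply/existsP; exists z; by rewrite exz H1.
move=> [w [/existsP [z /andP [exz H1]] H2]].
apply/existsP; exists z; rewrite exz /=; apply/IH; by exists w.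
Qed.

Lemma nwalk1 x y : nwalk e 1 x y = e x y.
Proof.
apply/existsP/idP => [[z /andP [H /eqP <-]]|H] //; exists y; by rewrite H eqxx.
Qed.

Lemma nwalk_sym_imp n x y : nwalk e n x y -> nwalk e n y x.
Proof.
elim: n x y => [|n IH] x y; first by rewrite /= eq_sym.
move=> H; case/existsP: H => z /andP [exz Hz].
rewrite -addn1; apply/nwalkDP; exists z; split; first exact: IH.
by rewrite nwalk1 e_sym.
Qed.

Lemma nwalk_sym n x y : nwalk e n x y = nwalk e n y x.
Proof. by apply/idP/idP; apply: nwalk_sym_imp. Qed.

Lemma path_nwalk p x : path e x p -> nwalk e (size p) x (last x p).
Proof.
elim: p x => [|a p IH] x /=; first by rewrite eqxx.
move=> /andP [exa pa]; apply/existsP; exists a; by rewrite exa IH.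
Qed.

Lemma walk_exists x y : exists2 n, n < #|T| & nwalk e n x y.
Proof.
have /connectP [p pp ->] := G_conn x y.
case: (shortenP pp) => p' pp' up' _.
exists (size p'); last exact: path_nwalk.
have := max_card (mem (x :: p')).
by rewrite (card_uniqP up').
Qed.

Lemma dist_walk x y : nwalk e (dist e x y) x y.
Proof.
have [n nT Hn] := walk_exists x y.
have hs : has (fun n => nwalk e n x y) (iota 0 #|T|).
  by apply/hasP; exists n => //; rewrite mem_iota.
have := nth_find 0 hs.
have dT : dist e x y < #|T| by rewrite /dist -{2}(size_iota 0 #|T|) -has_find.
by rewrite -/(dist e x y) nth_iota.
Qed.

Lemma dist_min x y n : nwalk e n x y -> dist e x y <= n.
Proof.
move=> Hn; have [m mT Hm] := walk_exists x y.
have hs : has (fun n => nwalk e n x y) (iota 0 #|T|).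
  by apply/hasP; exists m => //; rewrite mem_iota.
rewrite leqNgt; apply/negP => lt.
have dT : dist e x y < #|T| by rewrite /dist -{2}(size_iota 0 #|T|) -has_find.
have := before_find 0 lt; rewrite nth_iota ?Hn //; exact: ltn_trans lt dT.
Qed.

Lemma dist_tri x y z : dist e x z <= dist e x y + dist e y z.
Proof. apply: dist_min; apply/nwalkDP; exists y; split; exact: dist_walk. Qed.

Lemma dist_sym x y : dist e x y = dist e y x.
Proof.
by apply/eqP; rewrite eqn_leq; apply/andP; split; apply: dist_min;
  rewrite nwalk_sym; apply: dist_walk.
Qed.

Lemma dist_xx x : dist e x x = 0.
Proof. apply/eqP; rewrite -leqn0; apply: dist_min => /=; exact: eqxx. Qed.

Lemma dist_adj x y : e x y -> dist e x y = 1.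
Proof.
move=> exy; apply/eqP; rewrite eqn_leq; apply/andP; split.
  by apply: dist_min; rewrite nwalk1.
rewrite lt0n; apply/negP => /eqP H.
have := dist_walk x y; rewrite H /= => /eqP xy; by rewrite xy e_irr in exy.
Qed.

Lemma dist_le1 x y : e x y -> dist e x y <= 1.
Proof. by move/dist_adj ->. Qed.

Variable v : T.
Definition comp c := [set y | connect (edel e v) c y].

Lemma edel_sym : symmetric (edel e v).
Proof. by move=> x y; rewrite /edel e_sym; case: (x != v); case: (y != v). Qed.

Lemma csym : connect_sym (edel e v).
Proof. exact: sym_connect_sym edel_sym. Qed.

Lemma comp_closed c z w : z \in comp c -> edel e v z w -> w \in comp c.
Proof. rewrite !inE => H1 H2; apply: connect_trans H1 (connect1 H2). Qed.

Lemma comp_notv c : c != v -> v \notin comp c.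
Proof.
move=> cv; rewrite inE csym; apply/negP => /connectP [[|a p] /= pp cl].
  by rewrite cl eqxx in cv.
by move: pp; rewrite /edel eqxx /= andbF.
Qed.

Lemma comp_self c : c \in comp c.
Proof. by rewrite inE connect0. Qed.

Lemma comp_same c c' z : z \in comp c -> z \in comp c' -> comp c = comp c'.
Proof.
rewrite !inE => H1 H2; apply/setP => y; rewrite !inE.
by apply/idP/idP => H; [apply: connect_trans H2 _; apply: connect_trans _ H; rewrite csym
  | apply: connect_trans H1 _; apply: connect_trans _ H; rewrite csym].
Qed.

Lemma walk_split c : c != v -> forall n r x, r \notin comp c -> x \in comp c ->
  nwalk e n r x -> exists k z, [/\ k < n, z \in comp c, nwalk e k r v, e v z &
     nwalk e (n - k.+1) z x].
Proof.
move=> cv; elim=> [|n IH] r x rC xC.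
  by move=> /= /eqP rx; rewrite rx xC in rC.
move=> /= /existsP [w /andP [erw Hw]].
case: (boolP (w \in comp c)) => wC.
  have rv : r = v.
    apply/eqP; apply: contraNT rC => rv; apply: (comp_closed wC).
    rewrite /edel e_sym erw rv andbT /=; apply: contraTneq wC => ->.
    exact: comp_notv.
  subst r; exists 0, w; split=> //=; by rewrite subn1.
have [k [z [kn zC Hk evz Hr]]] := IH w x wC xC Hw.
exists k.+1, z; split=> //.
by apply/existsP; exists w; rewrite erw.
Qed.

Lemma dist_through c r x : c != v -> r \notin comp c -> x \in comp c ->
  dist e r x = dist e r v + dist e v x.
Proof.
move=> cv rC xC.
have [k [z [kn zC Hk evz Hr]]] := walk_split cv rC xC (dist_walk r x).
apply/eqP; rewrite eqn_leq dist_tri /=.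
have h1 := dist_min Hk.
have h2 : dist e v x <= 1 + (dist e r x - k.+1).
  apply: dist_min; apply/nwalkDP; exists z; split=> //; by rewrite nwalk1.
lia.
Qed.

Lemma dist_through' c r x : c != v -> r \notin comp c -> x \in comp c :|: [set v] ->
  dist e r x = dist e r v + dist e v x.
Proof.
move=> cv rC; rewrite in_setU in_set1 => /orP [xC|/eqP ->]; last by rewrite dist_xx addn0.
exact: (dist_through cv rC xC).
Qed.

Lemma neighbor c : c != v -> exists2 z, z \in comp c & e v z.
Proof.
move=> cv; have [k [z [_ zC _ evz _]]] :=
  walk_split cv (comp_notv cv) (comp_self c) (dist_walk v c).
by exists z.
Qed.


Lemma side c r x y : c != v -> r \in comp c -> dist e r x = dist e r y ->
  x \notin comp c -> y \notin comp c -> dist e v x = dist e v y.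
Proof.
move=> cv rC H xC yC.
move: H; rewrite (dist_sym r x) (dist_sym r y).
rewrite (dist_through cv xC rC) (dist_through cv yC rC) (dist_sym x v) (dist_sym y v).
lia.
Qed.

Lemma side2 c r x y : c != v -> r \in comp c -> x \in comp c -> y \notin comp c ->
  dist e r x = dist e r y -> dist e v y <= dist e v x.
Proof.
move=> cv rC xC yC H.
have := dist_tri r v x.
rewrite H (dist_sym r y) (dist_through cv yC rC) (dist_sym y v) (dist_sym v r).
lia.
Qed.

Lemma resolve_drop R ca cb : resolving e R -> v \in R -> ca != v -> cb != v ->
  comp ca != comp cb ->
  (exists2 ra, ra \in R :\ v & ra \in comp ca) ->
  (exists2 rb, rb \in R :\ v & rb \in comp cb) -> resolving e (R :\ v).
Proof.
move=> HR vR cav cbv dab [ra raR raC] [rb rbR rbC] x y xy.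
have [r rR dr] := HR x y xy.
case: (r =P v) => [rv|rnv]; last by exists r; rewrite // !inE rR andbT; apply/eqP.
subst r.
case: (boolP [exists r in R :\ v, dist e r x != dist e r y]).
  by move=> /existsP [r /andP [rR' H]]; exists r.
move=> /existsPn hall.
have eqd r : r \in R :\ v -> dist e r x = dist e r y.
  by move=> rR'; have := hall r; rewrite rR' /= negbK => /eqP.
have da := eqd _ raR; have db := eqd _ rbR.
have disj z : z \in comp ca -> z \in comp cb -> False.
  by move=> z1 z2; move/eqP: dab; apply; apply: comp_same z1 z2.
have ha : (x \in comp ca) || (y \in comp ca).
  apply/negPn/negP; rewrite negb_or => /andP [h1 h2].
  by move/eqP: dr; apply; apply: side cav raC da h1 h2.
have hb : (x \in comp cb) || (y \in comp cb).
  apply/negPn/negP; rewrite negb_or => /andP [h1 h2].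
  by move/eqP: dr; apply; apply: side cbv rbC db h1 h2.
exfalso; case/orP: ha => [xa|ya]; case/orP: hb => [xb|yb].
- by case: (disj x xa xb).
- have yna : y \notin comp ca by apply/negP => ya; apply: (disj y).
  have xnb : x \notin comp cb by apply/negP => xb; apply: (disj x).
  have h1 := side2 cav raC xa yna da.
  have h2 := side2 cbv rbC yb xnb (esym db).
  by move/eqP: dr; apply; apply/eqP; rewrite eqn_leq h1 h2.
- have xna : x \notin comp ca by apply/negP => xa; apply: (disj x).
  have ynb : y \notin comp cb by apply/negP => yb; apply: (disj y).
  have h1 := side2 cav raC ya xna (esym da).
  have h2 := side2 cbv rbC xb ynb db.
  by move/eqP: dr; apply; apply/eqP; rewrite eqn_leq h1 h2.
- by case: (disj y ya yb).
Qed.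

Lemma two_missing R c1 c2 : resolving e R -> c1 != v -> c2 != v ->
  comp c1 != comp c2 ->
  (forall r, r \in R -> r \notin comp c1) ->
  (forall r, r \in R -> r \notin comp c2) -> False.
Proof.
move=> HR c1v c2v d12 R1 R2.
have [x xC evx] := neighbor c1v.
have [y yC evy] := neighbor c2v.
have xy : x != y.
  apply/eqP => exy; subst y; move/eqP: d12; apply; exact: comp_same xC yC.
have [r rR] := HR x y xy.
rewrite (dist_through c1v (R1 _ rR) xC) (dist_through c2v (R2 _ rR) yC).
by rewrite (dist_adj evx) (dist_adj evy) eqxx.
Qed.


Lemma missing_path R c : resolving e R -> c != v ->
  (forall r, r \in R -> r \notin comp c) ->
  induced_is_path e (comp c :|: [set v]).
Proof.
move=> HR cv RC.
set S := comp c :|: [set v].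
set f := dist e v.
have vS : v \in S by rewrite !inE eqxx orbT.
have inj x y : x \in S -> y \in S -> f x = f y -> x = y.
  move=> xS yS fxy; apply/eqP; apply/negPn/negP => xy.
  have [r rR] := HR x y xy.
  move: fxy; rewrite /f => fxy.
  by rewrite (dist_through' cv (RC _ rR) xS) (dist_through' cv (RC _ rR) yS) fxy eqxx.
have pred x k : x \in S -> f x = k.+1 -> exists2 w, w \in S & f w = k /\ e w x.
  move=> xS fx.
  have := dist_walk v x; rewrite -/(f x) fx -addn1 => /nwalkDP [w [H1 H2]].
  rewrite nwalk1 in H2.
  exists w; last split=> //.
    case: (w =P v) => [-> //|wv].
    have xv : x != v.
      by apply/eqP => xv; move: fx; rewrite xv /f dist_xx.
    move: xS; rewrite /S in_setU in_set1 (negbTE xv) orbF => xC.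
    rewrite in_setU; apply/orP; left; apply: (comp_closed xC).
    by rewrite /edel e_sym H2 xv; apply/eqP.
  have h1 := dist_min H1.
  have h2 := dist_tri v w x.
  have h3 := dist_le1 H2.
  move: h1 h2 h3 fx; rewrite /f; lia.
have down d i x : x \in S -> f x = i + d -> exists2 y, y \in S & f y = i.
  elim: d x => [|d IH] x xS fx; first by exists x; rewrite // fx addn0.
  have fx' : f x = (i + d).+1 by rewrite fx addnS.
  have [w wS [fw _]] := pred x (i + d) xS fx'.
  exact: IH wS fw.
case: (@arg_maxnP T v (mem S) f vS) => xm xmS xmmax.
set m := (f xm).+1.
pose g i := odflt v [pick y in S | f y == i].
have gspec i : i < m -> g i \in S /\ f (g i) = i.
  move=> im; have fxe : f xm = i + (f xm - i) by rewrite /m in im; lia.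
  have [y yS fy] := down (f xm - i) i xm xmS fxe.
  rewrite /g; case: pickP => [z /andP [zS /eqP fz] | none] //=.
  by have := none y; rewrite yS fy eqxx.
set s := map g (iota 0 m).
have nths i : i < m -> nth v s i = g i.
  by move=> im; rewrite /s (nth_map 0) ?size_iota // nth_iota.
have ginv x : x \in S -> g (f x) = x.
  move=> xS; have fxm : f x < m by rewrite /m ltnS; exact: xmmax.
  have [gS gf] := gspec _ fxm; exact: inj gS xS gf.
have memS x : (x \in s) = (x \in S).
  apply/idP/idP.
    by move=> /mapP [i]; rewrite mem_iota add0n => /andP [_ im] ->; case: (gspec i im).
  move=> xS; rewrite -(ginv x xS); apply: map_f; rewrite mem_iota add0n /m ltnS.
  exact: xmmax.
have us : uniq s.
  rewrite map_inj_in_uniq ?iota_uniq //.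
  move=> i j; rewrite !mem_iota !add0n => /andP [_ im] /andP [_ jm] gij.
  by have [_ <-] := gspec i im; have [_ <-] := gspec j jm; rewrite gij.
have idx x : x \in s -> index x s = f x.
  move=> xs; have xS : x \in S by rewrite -memS.
  have fxm : f x < m by rewrite /m ltnS; exact: xmmax.
  rewrite -{1}(ginv x xS) -nths //; apply: index_uniq => //.
  by rewrite size_map size_iota.
exists s; split=> //.
  by apply/setP => x; rewrite inE memS.
move=> x y xs ys; rewrite !idx //.
have xS : x \in S by rewrite -memS.
have yS : y \in S by rewrite -memS.
apply/idP/idP.
  move=> exy.
  have xy : x != y by apply/eqP => xy; rewrite xy e_irr in exy.
  have fxy : f x != f y by apply/eqP => /(inj x y xS yS) /eqP; apply/negP.
  have h1 := dist_tri v x y; have h2 := dist_tri v y x.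
  have h3 := dist_le1 exy; rewrite e_sym in exy; have h4 := dist_le1 exy.
  rewrite -/(f x) -/(f y) in h1 h2.
  have : f y = (f x).+1 \/ f x = (f y).+1 by lia.
  by case=> ->; rewrite eqxx ?orbT.
case/orP => /eqP H.
  have [w wS [fw ewy]] := pred y (f x) yS (esym H).
  by rewrite -(inj w x wS xS fw).
have [w wS [fw ewx]] := pred x (f y) xS (esym H).
by rewrite e_sym -(inj w y wS yS fw).
Qed.

End Dist.

Theorem theorem1 (T : finType) (e : rel T)
  (e_sym : symmetric e) (e_irr : irreflexive e)
  (G_conn : connected_graph e) (v : T) (v_cut : cut_vertex e v) :
  (2 < #|components_del e v| \/
   (#|components_del e v| = 2 /\
    forall C, C \in components_del e v -> ~ induced_is_path e (C :|: [set v]))) ->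
  void_vertex e v.
Proof.
move=> Hcase R [HR Hmin]; apply/negP => vR.
set P := components_del e v.
have memP C : C \in P -> exists2 c, c != v & C = comp e v c.
  by move=> /imsetP [c]; rewrite in_setC1 => cv ->; exists c.
set B := R :\ v.
set H := [set C in P | [exists r in B, r \in C]].
have noB : ~ resolving e B.
  move=> HB; have := Hmin B HB; rewrite (cardsD1 v R) vR -/B; lia.
case: (ltnP 1 #|H|) => hH.
  case/card_gt1P: hH => C1 [C2 [C1H C2H C12]].
  move: C1H C2H; rewrite !inE => /andP [C1P /existsP [r1 /andP [r1B r1C]]]
    /andP [C2P /existsP [r2 /andP [r2B r2C]]].
  have [c1 c1v E1] := memP _ C1P; have [c2 c2v E2] := memP _ C2P.
  subst C1 C2; apply: noB; apply: (resolve_drop e_sym G_conn HR vR c1v c2v C12).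
    by exists r1.
  by exists r2.
have HS : H \subset P by apply/subsetP => C; rewrite inE => /andP [].
have cardD : #|P :\: H| = #|P| - #|H|.
  by rewrite cardsD; move/setIidPr: HS => ->.
have miss C : C \in P :\: H -> exists2 c, c != v & C = comp e v c /\
   forall r, r \in R -> r \notin comp e v c.
  rewrite !inE => /andP [CH CP]; have [c cv EC] := memP _ CP.
  exists c => //; split=> // r rR; apply/negP => rC.
  move/negP: CH; apply; rewrite CP /=; apply/existsP; exists r.
  rewrite EC rC andbT.
  rewrite /B !inE rR andbT; apply: contraTneq rC => ->.
  exact: comp_notv.
case: Hcase => [P3 | [P2 Hnp]].
  have P3' : 2 < #|P| := P3.
  have : 1 < #|P :\: H| by rewrite cardD; lia.
  case/card_gt1P => C1 [C2 [C1D C2D C12]].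
  have [c1 c1v [E1 R1]] := miss _ C1D; have [c2 c2v [E2 R2]] := miss _ C2D.
  subst C1 C2; exact: (two_missing _ _ _ HR c1v c2v C12 R1 R2).
have P2' : #|P| = 2 := P2.
have : 0 < #|P :\: H| by rewrite cardD; lia.
case/card_gt0P => C CD.
have [c cv [EC RC]] := miss _ CD.
have CP : C \in P by move: CD; rewrite inE => /andP [].
apply: (Hnp C CP); rewrite EC.
exact: (missing_path _ _ _ HR cv RC).
Qed.
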